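(* Let $B$ be an even unimodular lattice of rank $r$ with a fixed basis, and let $I_{1,1}$ have standard basis $x,y$ ($\langle x,x\rangle=1=-\langle y,y\rangle$, $\langle x,y\rangle=0$). Let $(\tfrac12)I_{1,1}=\{\tfrac12(p x+q y): p,q\in\mathbb{Z},\ p\equiv q \pmod 2\}$ with the form extended bilinearly from $I_{1,1}$, and regard $L=B\oplus I_{1,1}$ and $M=B\oplus(\tfrac12)I_{1,1}$ as $\mathbb{Z}$-submodules of the same rational quadratic space $(B\oplus I_{1,1})\otimes\mathbb{Q}$. Then $O(M)\cong O(L)$; the isomorphism is given by the fact that every isometry of $M$ (extended $\mathbb{Q}$-linearly) maps $L$ onto $L$, and every isometry of $L$ (extended $\mathbb{Q}$-linearly) maps $M$ onto $M$.
   Context: $O(L)$ denotes the group of isometries of a lattice (or $\mathbb{Z}$-module with a $\mathbb{Q}$-valued symmetric bilinear form) $L$ onto itself. Even: all norms $\langle\eta,\eta\rangle$ even; unimodular: Gram determinant $\pm1$. *)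

(* Defs.v *)
From HB Require Import structures.
From mathcomp Require Import all_boot all_order all_algebra.
Set Implicit Arguments. Unset Strict Implicit. Unset Printing Implicit Defensive.
Import Order.TTheory GRing.Theory Num.Theory.
Local Open Scope ring_scope.

Definition is_intQ (a : rat) : Prop := exists z : int, a = z%:~R.

Definition int_vec n (v : 'rV[rat]_n) : Prop := forall i, is_intQ (v 0 i).

Definition bform n (G : 'M[rat]_n) (v w : 'rV[rat]_n) : rat := (v *m G *m w^T) 0 0.

(* B = Z^r with Gram matrix G (w.r.t. the fixed basis) is an even unimodular
   lattice: G symmetric, Gram determinant +-1, all norms of lattice vectors
   are even integers. *)
Definition even_unimodular r (G : 'M[rat]_r) : Prop :=
  G^T = G /\ (\det G = 1 \/ \det G = -1) /\
  forall v : 'rV[rat]_r, int_vec v ->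
    exists k : int, bform G v v = 2%:R * k%:~R.

Definition J11 : 'M[rat]_2 :=
  \matrix_(i, j) (if i == j then (if i == 0 then 1 else -1) else 0).

Definition gramBI r (G : 'M[rat]_r) : 'M[rat]_(r + 2) := block_mx G 0 0 J11.

Definition inL r (v : 'rV[rat]_(r + 2)) : Prop := int_vec v.

Definition inM r (v : 'rV[rat]_(r + 2)) : Prop :=
  int_vec (lsubmx v) /\
  exists p q : int, (2 %| p - q)%Z /\
    rsubmx v 0 0 = p%:~R / 2%:R /\ rsubmx v 0 1 = q%:~R / 2%:R.

(* A is (the Q-linear extension of) an isometry of the lattice S (a Z-submodule
   of full rank of the rational quadratic space with Gram matrix F), acting on
   row vectors: A preserves the form, is invertible and maps S onto S. *)
Definition lattice_isometry n (F : 'M[rat]_n) (S : 'rV[rat]_n -> Prop)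
  (A : 'M[rat]_n) : Prop :=
  A *m F *m A^T = F /\ A \in unitmx /\
  (forall v, S v -> S (v *m A)) /\
  (forall w, S w -> exists v, S v /\ v *m A = w).

(* Main.v *)
Require Import Defs.
From HB Require Import structures.
From mathcomp Require Import all_boot all_order all_algebra.
From mathcomp Require Import ring lra zify.
Set Implicit Arguments. Unset Strict Implicit. Unset Printing Implicit Defensive.
Import Order.TTheory GRing.Theory Num.Theory.
Local Open Scope ring_scope.

Lemma parity (x : int) : (exists y, x = 2 * y) \/ (exists y, x = 2 * y + 1).
Proof. case: (boolP (2 %| x)%Z) => H; [left|right]; exists (x %/ 2)%Z; lia. Qed.

Lemma toint (x y : int) : (x%:~R : rat) = y%:~R -> x = y.
Proof. by move/eqP; rewrite eqr_int => /eqP. Qed.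

Lemma intQ_int (z : int) : is_intQ z%:~R.
Proof. by exists z. Qed.

Lemma intQ_D a b : is_intQ a -> is_intQ b -> is_intQ (a + b).
Proof. by move=> [x ->] [y ->]; exists (x + y); rewrite intrD. Qed.

Lemma intQ_M a b : is_intQ a -> is_intQ b -> is_intQ (a * b).
Proof. by move=> [x ->] [y ->]; exists (x * y); rewrite intrM. Qed.

Lemma intQ_Dl a b : is_intQ a -> is_intQ (a + b) -> is_intQ b.
Proof.
move=> [x Ex] [y Ey]; exists (y - x); rewrite intrB -Ey -Ex; ring.
Qed.

Lemma intQ_sum n (F : 'I_n -> rat) : (forall i, is_intQ (F i)) -> is_intQ (\sum_i F i).
Proof.
move=> H; elim/big_ind: _ => //; first by exists 0.
by move=> x y; apply: intQ_D.
Qed.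

Lemma intQ_prod n (F : 'I_n -> rat) : (forall i, is_intQ (F i)) -> is_intQ (\prod_i F i).
Proof.
move=> H; elim/big_ind: _ => //; first by exists 1.
by move=> x y; apply: intQ_M.
Qed.

Lemma half_int (x : int) : is_intQ (x%:~R / 2%:R) -> exists y, x = 2 * y.
Proof.
move=> [z Ez]; exists z; apply: toint.
have -> : (x%:~R : rat) = 2%:R * (x%:~R / 2%:R) by field.
by rewrite Ez intrM.
Qed.

Lemma bform_sum n (G : 'M[rat]_n) v w :
  bform G v w = \sum_j (\sum_i v 0 i * G i j) * w 0 j.
Proof. by rewrite /bform !mxE; apply: eq_bigr => j _; rewrite !mxE. Qed.

Lemma bform_sym n (G : 'M[rat]_n) v w : G^T = G -> bform G v w = bform G w v.
Proof.
move=> HG; rewrite /bform.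
have -> : (v *m G *m w^T) 0 0 = ((v *m G *m w^T)^T) 0 0 by rewrite [RHS]mxE.
by rewrite !trmx_mul trmxK HG mulmxA.
Qed.

Lemma bformDl n (G : 'M[rat]_n) u v w : bform G (u + v) w = bform G u w + bform G v w.
Proof. by rewrite /bform !mulmxDl mxE. Qed.

Lemma bformDr n (G : 'M[rat]_n) u v w : bform G w (u + v) = bform G w u + bform G w v.
Proof. by rewrite /bform linearD /= mulmxDr mxE. Qed.

Lemma bform_delta n (G : 'M[rat]_n) i j : bform G (delta_mx 0 i) (delta_mx 0 j) = G i j.
Proof. by rewrite /bform trmx_delta -rowE -colE !mxE. Qed.

Lemma bform_deltar n (G : 'M[rat]_n) b j : bform G b (delta_mx 0 j) = (b *m G) 0 j.
Proof. by rewrite /bform trmx_delta -colE !mxE. Qed.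

Lemma int_delta n (i : 'I_n) : int_vec (delta_mx 0 i).
Proof. by move=> k; rewrite mxE; case: (_ && _); [exists 1|exists 0]. Qed.

Lemma int_vecD n (u v : 'rV[rat]_n) : int_vec u -> int_vec v -> int_vec (u + v).
Proof. by move=> Hu Hv k; rewrite mxE; apply: intQ_D. Qed.

Lemma Gint r (G : 'M[rat]_r) : even_unimodular G -> forall i j, is_intQ (G i j).
Proof.
move=> [HT [Hdet HE]] i j.
have [a Ha] := HE _ (int_delta i).
have [b Hb] := HE _ (int_delta j).
have [k Hk] := HE _ (int_vecD (int_delta i) (int_delta j)).
move: Hk; rewrite !bformDl !bformDr !bform_delta.
have -> : G j i = G i j by rewrite -[in LHS]HT mxE.
rewrite bform_delta in Ha; rewrite bform_delta in Hb.
rewrite Ha Hb => Hk; exists (k - a - b).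
rewrite !intrB; apply: (mulfI (_ : (2%:R : rat) != 0)) => //.
rewrite !mulrBr -Hk; ring.
Qed.

Lemma bform_int r (G : 'M[rat]_r) : even_unimodular G ->
  forall b b', int_vec b -> int_vec b' -> is_intQ (bform G b b').
Proof.
move=> EU b b' Hb Hb'; rewrite bform_sum; apply: intQ_sum => j.
apply: intQ_M => //; apply: intQ_sum => i; apply: intQ_M => //; exact: Gint.
Qed.

Lemma sign_int (s : bool) : is_intQ ((-1) ^+ s).
Proof. by case: s; [exists (-1)|exists 1]. Qed.

Lemma det_int n (A : 'M[rat]_n) : (forall i j, is_intQ (A i j)) -> is_intQ (\det A).
Proof.
move=> H; rewrite /determinant; elim/big_ind: _ => //; first by exists 0.
  by move=> x y; apply: intQ_D.
move=> s _; apply: intQ_M.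
  by case: (perm.odd_perm s) => /=; rewrite /is_intQ; [exists (-1)|exists 1]; rewrite ?expr1 ?expr0.
apply: (big_rec (fun x => is_intQ x)); first by exists 1.
by move=> i x _ Hx; apply: intQ_M.
Qed.

Lemma cofactor_int n (A : 'M[rat]_n) i j : (forall i j, is_intQ (A i j)) -> is_intQ (cofactor A i j).
Proof.
move=> H; rewrite /cofactor; apply: intQ_M.
  elim: (_ + _)%N => [|k IH]; first by exists 1.
  by rewrite exprS; apply: intQ_M => //; exists (-1).
apply: det_int => k l; rewrite !mxE; exact: H.
Qed.

Lemma dual_int r (G : 'M[rat]_r) : even_unimodular G ->
  forall b, (forall b', int_vec b' -> is_intQ (bform G b b')) -> int_vec b.
Proof.
move=> EU b Hb.
have [HT [Hdet HE]] := EU.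
have Gu : G \in unitmx.
  by rewrite unitmxE unitfE; case: Hdet => ->.
rewrite -(mulmxK Gu b) => k; rewrite mxE; apply: intQ_sum => i.
apply: intQ_M; first by rewrite -bform_deltar; apply: Hb; exact: int_delta.
rewrite /invmx Gu !mxE; apply: intQ_M.
  by case: Hdet => ->; [exists 1 | exists (-1)]; rewrite ?invr1 ?invrN1.
apply: cofactor_int; exact: Gint.
Qed.

Definition hv (x y : rat) : 'rV[rat]_2 := \row_j (if j == 0 then x else y).
Definition mkv r (b : 'rV[rat]_r) x y : 'rV[rat]_(r + 2) := row_mx b (hv x y).
Lemma mkv_l r (b : 'rV[rat]_r) x y : lsubmx (mkv b x y) = b.
Proof. by rewrite /mkv row_mxKl. Qed.
Lemma mkv_r0 r (b : 'rV[rat]_r) x y : rsubmx (mkv b x y) 0 0 = x.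
Proof. by rewrite /mkv row_mxKr mxE. Qed.
Lemma mkv_r1 r (b : 'rV[rat]_r) x y : rsubmx (mkv b x y) 0 1 = y.
Proof. by rewrite /mkv row_mxKr mxE. Qed.

Lemma bformE r (G : 'M[rat]_r) v w : bform (gramBI G) v w =
  bform G (lsubmx v) (lsubmx w) + (rsubmx v 0 0 * rsubmx w 0 0 - rsubmx v 0 1 * rsubmx w 0 1).
Proof.
rewrite {1}/bform -{1}(hsubmxK v) -{1}(hsubmxK w) /gramBI mul_row_block.
rewrite ?mul0mx ?mulmx0 ?addr0 ?add0r tr_row_mx mul_row_col mxE; congr (_ + _).
rewrite !mxE !big_ord_recl big_ord0 !mxE !big_ord_recl !big_ord0 !mxE /=.
have -> : lift ord0 ord0 = 1 :> 'I_2 by apply: val_inj.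
have -> : ord0 = 0 :> 'I_2 by apply: val_inj.
ring.
Qed.

Lemma intL r (v : 'rV[rat]_(r + 2)) :
  inL v <-> int_vec (lsubmx v) /\ is_intQ (rsubmx v 0 0) /\ is_intQ (rsubmx v 0 1).
Proof.
split.
  by move=> H; split; [move=> k|split]; rewrite mxE; apply: H.
move=> [Hb [Hs Ht]] k; rewrite -(hsubmxK v) -(splitK k).
case: (split k) => j /=; first by rewrite row_mxEl; apply: Hb.
rewrite row_mxEr; case: j => [[|[|m]] Hm] //.
  by rewrite (_ : Ordinal Hm = 0) //; apply: val_inj.
by rewrite (_ : Ordinal Hm = 1) //; apply: val_inj.
Qed.

Definition evenQ (a : rat) := exists k : int, a = 2%:R * k%:~R.
Definition oddQ (a : rat) := exists k : int, a = (2 * k + 1)%:~R.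

Lemma bform0r n (G : 'M[rat]_n) b : bform G b 0 = 0.
Proof. by rewrite /bform trmx0 mulmx0 mxE. Qed.
Lemma bform0l n (G : 'M[rat]_n) b : bform G 0 b = 0.
Proof. by rewrite /bform !mul0mx mxE. Qed.
Lemma int_vec0 n : int_vec (0 : 'rV[rat]_n).
Proof. by move=> k; rewrite mxE; exists 0. Qed.

Lemma intQ_eq a b : is_intQ a -> a = b -> is_intQ b.
Proof. by move=> H <-. Qed.

Lemma dvd2 (x : int) : (2 %| x)%Z -> exists d, x = 2 * d.
Proof. by move/dvdzP => [d ->]; exists d; rewrite mulrC. Qed.

Lemma charL r (G : 'M[rat]_r) : even_unimodular G -> forall v,
  inL v <-> inM v /\ ((forall w, inM w -> is_intQ (bform (gramBI G) v w))
                       \/ oddQ (bform (gramBI G) v v)).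
Proof.
move=> EU v; have [_ [_ HE]] := EU; split.
  move=> /intL [Hb [[a Ha] [c Hc]]].
  have Mv : inM v.
    split=> //; exists (2 * a), (2 * c); split; first lia.
    by rewrite Ha Hc; split; field.
  split=> //; case: (parity (a - c)) => [[m Hm]|[m Hm]].
    left=> w [Hb' [p' [q' [Hpq [Hs' Ht']]]]].
    rewrite bformE Ha Hc Hs' Ht'; apply: intQ_D; first exact: bform_int.
    have [n Hn] := dvd2 Hpq.
    exists (a * n + m * p' - 2 * m * n).
    have -> : c = a - 2 * m by lia.
    have -> : q' = p' - 2 * n by lia.
    by field.
  right; have [k Hk] := HE _ Hb.
  exists (k + (2 * m + 1) * (m + c) + m); rewrite bformE Ha Hc Hk.
  have -> : a = c + 2 * m + 1 by lia.
  ring.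
move=> [[Hb [p [q [Hpq [Hs Ht]]]]] D]; apply/intL; split=> //.
have [d Hd] := dvd2 Hpq.
have Hq : q = p - 2 * d by lia.
case: (parity p) => [[u Hu]|[u Hu]].
  by split; [exists u | exists (u - d)]; rewrite ?Hs ?Ht ?Hq Hu; field.
exfalso; case: D => [D|[j Hj]].
  have M1 : inM (mkv (0 : 'rV[rat]_r) (1 / 2%:R) (1 / 2%:R)).
    split; first by rewrite mkv_l; exact: int_vec0.
    by exists 1, 1; split; [lia | rewrite mkv_r0 mkv_r1; split; field].
  have M2 : inM (mkv (0 : 'rV[rat]_r) (1 / 2%:R) (- (1 / 2%:R))).
    split; first by rewrite mkv_l; exact: int_vec0.
    by exists 1, (-1); split; [lia | rewrite mkv_r0 mkv_r1; split; field].
  move: (D _ M1) (D _ M2).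
  rewrite !bformE !mkv_l !mkv_r0 !mkv_r1 !bform0r !add0r Hs Ht Hq.
  move=> H1 H2.
  have [e He] : exists e, d = 2 * e.
    by apply: half_int; apply: (intQ_eq H1); field.
  have [f Hf] : exists f, p - d = 2 * f.
    by apply: half_int; apply: (intQ_eq H2); field.
  lia.
have [k Hk] := HE _ Hb.
rewrite bformE Hs Ht Hk Hq in Hj.
have [h Hh] : exists h, d * (p - d) = 2 * h.
  case: (parity d) => [[e He]|[e He]].
    by exists (e * (p - d)); rewrite He; ring.
  by exists (d * (u - e)); rewrite Hu He; ring.
have E : ((2 * j + 1)%:~R : rat) = (2 * k + d * (p - d))%:~R.
  by rewrite -Hj; field.
move/toint: E; rewrite Hh; lia.
Qed.

Lemma charM r (G : 'M[rat]_r) : even_unimodular G -> forall v,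
  inM v <-> (forall w, inL w -> evenQ (bform (gramBI G) w w) -> is_intQ (bform (gramBI G) v w)).
Proof.
move=> EU v; have [_ [_ HE]] := EU; split.
  move=> [Hb [p [q [Hpq [Hs Ht]]]]] w /intL [Hb' [[a Ha] [c Hc]]] [k Hk].
  have [k' Hk'] := HE _ Hb'.
  rewrite bformE Ha Hc Hk' in Hk.
  have [d Hd] := dvd2 Hpq.
  have Hq : q = p - 2 * d by lia.
  case: (parity (a - c)) => [[m Hm]|[m Hm]].
    rewrite bformE Hs Ht Ha Hc; apply: intQ_D; first exact: bform_int.
    exists (p * m + d * a - 2 * d * m).
    have -> : c = a - 2 * m by lia.
    rewrite Hq; by field.
  exfalso.
  have E : ((2 * k)%:~R : rat) = (2 * k' + 2 * ((2 * m + 1) * (m + c) + m) + 1)%:~R.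
    rewrite (_ : (2 * k)%:~R = 2%:R * k%:~R :> rat); last by rewrite intrM.
    rewrite -Hk (_ : a = c + 2 * m + 1); last by lia.
    ring.
  move/toint: E; lia.
move=> H.
have Hb : int_vec (lsubmx v).
  apply: (dual_int EU) => b' Hb'.
  have [k Hk] := HE _ Hb'.
  have L1 : inL (mkv b' 0 0).
    by apply/intL; rewrite mkv_l mkv_r0 mkv_r1; split=> //; split; exists 0.
  have E1 : evenQ (bform (gramBI G) (mkv b' 0 0) (mkv b' 0 0)).
    by exists k; rewrite bformE mkv_l mkv_r0 mkv_r1 Hk; ring.
  apply: (intQ_eq (H _ L1 E1)); rewrite bformE mkv_l mkv_r0 mkv_r1; ring.
have L2 : inL (mkv (0 : 'rV[rat]_r) 1 1).
  apply/intL; rewrite mkv_l mkv_r0 mkv_r1; split; first exact: int_vec0.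
  by split; exists 1.
have E2 : evenQ (bform (gramBI G) (mkv (0 : 'rV[rat]_r) 1 1) (mkv (0 : 'rV[rat]_r) 1 1)).
  by exists 0; rewrite bformE mkv_l mkv_r0 mkv_r1 bform0r; ring.
have L3 : inL (mkv (0 : 'rV[rat]_r) 2%:R 0).
  apply/intL; rewrite mkv_l mkv_r0 mkv_r1; split; first exact: int_vec0.
  by split; [exists 2 | exists 0].
have E3 : evenQ (bform (gramBI G) (mkv (0 : 'rV[rat]_r) 2%:R 0) (mkv (0 : 'rV[rat]_r) 2%:R 0)).
  by exists 2; rewrite bformE mkv_l mkv_r0 mkv_r1 bform0r; ring.
have [m Hm] := H _ L2 E2.
have [p Hp] := H _ L3 E3.
rewrite bformE mkv_l mkv_r0 mkv_r1 bform0r in Hm.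
rewrite bformE mkv_l mkv_r0 mkv_r1 bform0r in Hp.
split=> //; exists p, (p - 2 * m); split; first lia.
split.
  by rewrite -Hp; field.
by rewrite intrB intrM -Hp -Hm; field.
Qed.

Lemma bform_iso n (F A : 'M[rat]_n) v w : A *m F *m A^T = F ->
  bform F (v *m A) (w *m A) = bform F v w.
Proof.
move=> H; rewrite /bform trmx_mul !mulmxA; congr (_ 0 0).
have ->: v *m A *m F *m A^T = v *m (A *m F *m A^T) by rewrite !mulmxA.
by rewrite H.
Qed.


Lemma generic1 n (F A : 'M[rat]_n) (S T : 'rV[rat]_n -> Prop) :
  (forall v, T v <-> S v /\ ((forall w, S w -> is_intQ (bform F v w)) \/ oddQ (bform F v v))) ->
  lattice_isometry F S A -> lattice_isometry F T A.
Proof.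
move=> cT [H1 [H2 [H3 H4]]]; split=> //; split=> //; split.
- move=> v /cT [Sv D]; apply/cT; split; first exact: H3.
  case: D => [D|D]; [left|right; by rewrite bform_iso].
  move=> w /H4 [u [Su <-]]; rewrite bform_iso //; exact: D.
- move=> w /cT [Sw D]; have [v [Sv E]] := H4 _ Sw; exists v; split=> //.
  apply/cT; split=> //; case: D => [D|D]; [left|right; by rewrite -(bform_iso v v H1) E].
  move=> u Su; rewrite -(bform_iso v u H1) E; apply: D; exact: H3.
Qed.

Lemma generic2 n (F A : 'M[rat]_n) (S T : 'rV[rat]_n -> Prop) :
  (forall v, T v <-> (forall w, S w -> evenQ (bform F w w) -> is_intQ (bform F v w))) ->
  lattice_isometry F S A -> lattice_isometry F T A.
Proof.
move=> cT [H1 [H2 [H3 H4]]]; split=> //; split=> //; split.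
- move=> v /cT D; apply/cT => u /H4 [u' [Su' <-]].
  rewrite !bform_iso // => Eu; exact: D.
- move=> w /cT D; exists (w *m invmx A); rewrite mulmxKV //; split=> //.
  apply/cT => u Su Eu; rewrite -(bform_iso _ _ H1) mulmxKV //; apply: D; first exact: H3.
  by rewrite bform_iso.
Qed.

Theorem mainTheorem3 (r : nat) (G : 'M[rat]_r) :
  even_unimodular G ->
  forall A : 'M[rat]_(r + 2),
    lattice_isometry (gramBI G) (@inM r) A <->
    lattice_isometry (gramBI G) (@inL r) A.
Proof.
move=> EU A; split.
  by apply: generic1; exact: charL.
by apply: generic2; exact: charM.
Qed.
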